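(* Fix weights $w_1,\dots,w_n>0$ and boosts $b_1,\dots,b_n\in\mathbb{R}$, and let $\psi_i(c_i',p_i)=b_i+w_iv_i(c_i',p_i)$. Consider the Affine Maximizer Auction (AMA): given reports $(\mathbf{c}',\mathbf{p})$, the slot is allocated so as to maximize $\sum_{i\in N}\psi_i(c_i',p_i)\pi_i(\mathbf{c}',\mathbf{p})$ (i.e. to an advertiser with maximal $\psi_i(c_i',p_i)$, ties broken arbitrarily); losers pay $0$; the winner $i$ pays $v_i\big(\psi_i^{-1}(\psi^{(2)}(\mathbf{c}',\mathbf{p}),p_i),p_i\big)$, where $\psi_i^{-1}(\cdot,p_i)$ is the inverse of $c\mapsto\psi_i(c,p_i)$ and $\psi^{(2)}(\mathbf{c}',\mathbf{p})$ is the second highest of $\psi_j(c_j',p_j)$, $j\in N$. Then the AMA is incentive compatible and individually rational, and for each $i$ the price $\tilde{p}_i(c_i)\in\arg\max_{p'}v_i(c_i,p')$ is a dominant-strategy display price: for every $i$, every true cost $c_i$, every reports $(\mathbf{c}'_{-i},\mathbf{p}_{-i})$ of the others and every $p_i'$, the utility of $i$ under report $(c_i,\tilde{p}_i(c_i))$ is at least her utility under report $(c_i,p_i')$.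
   Context: There are advertisers $N=\{1,\dots,n\}$ competing for a single ad slot. Advertiser $i$ has a private product cost $c_i\in[\underline{c}_i,\overline{c}_i]$, sets a display price $p_i$, has conversion-rate function $\lambda_i:\mathbb{R}\to(0,1]$ and value $v_i(c_i,p_i)=(p_i-c_i)\lambda_i(p_i)$. An auction mechanism maps cost reports and display prices $(\mathbf{c}',\mathbf{p})$ to allocations $\pi_i(\mathbf{c}',\mathbf{p})\in\{0,1\}$ (at most one winner) and payments $x_i(\mathbf{c}',\mathbf{p})$; the utility of advertiser $i$ with true cost $c_i$ is $u_i=v_i(c_i,p_i)\pi_i(\mathbf{c}',\mathbf{p})-x_i(\mathbf{c}',\mathbf{p})$. IC: for all $i,c_i,\mathbf{p},\mathbf{c}'$, $u_i$ under report $(c_i,\mathbf{c}'_{-i})$ is at least $u_i$ under $(c_i',\mathbf{c}'_{-i})$. IR: $u_i\ge0$ under truthful cost report for all $i,c_i,\mathbf{p},\mathbf{c}'_{-i}$. *)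

(* Defs.v *)
From mathcomp Require Import all_boot all_order all_algebra.
Set Implicit Arguments. Unset Strict Implicit. Unset Printing Implicit Defensive.
Import Order.TTheory GRing.Theory Num.Theory.
Local Open Scope ring_scope.

Section AMA.
Variables (R : realFieldType) (n : nat).
(* lam i : conversion-rate function of advertiser i *)
Variable lam : 'I_n -> R -> R.
Variables (w b : 'I_n -> R).

Definition adval (i : 'I_n) (c p : R) : R := (p - c) * lam i p.

Definition psi (i : 'I_n) (c p : R) : R := b i + w i * adval i c p.

(* the inverse of c |-> psi_i(c,p) (an affine bijection when w_i > 0 and
   lambda_i(p) > 0): psi_i (psi_inv i y p) p = y *)
Definition psi_inv (i : 'I_n) (y p : R) : R := p - (y - b i) / (w i * lam i p).

(* second highest of the values psi_j(c'_j,p_j), j in N (as a multiset) *)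
Definition psi2 (cs ps : 'I_n -> R) : R :=
  nth 0 (sort (fun x y : R => y <= x) [seq psi j (cs j) (ps j) | j <- enum 'I_n]) 1.

(* A tie-breaking rule [sel] chooses the winner for each report profile;
   it is admissible for the AMA if it always picks an advertiser with
   maximal psi. *)
Definition ama_winner (sel : ('I_n -> R) -> ('I_n -> R) -> 'I_n) : Prop :=
  forall (cs ps : 'I_n -> R) (j : 'I_n),
    psi j (cs j) (ps j) <= psi (sel cs ps) (cs (sel cs ps)) (ps (sel cs ps)).

Definition alloc sel (cs ps : 'I_n -> R) (i : 'I_n) : R :=
  if sel cs ps == i then 1 else 0.

Definition pay sel (cs ps : 'I_n -> R) (i : 'I_n) : R :=
  if sel cs ps == i then adval i (psi_inv i (psi2 cs ps) (ps i)) (ps i) else 0.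

Definition util sel (i : 'I_n) (ci : R) (cs ps : 'I_n -> R) : R :=
  adval i ci (ps i) * alloc sel cs ps i - pay sel cs ps i.

End AMA.

Definition upd (R : Type) (n : nat) (f : 'I_n -> R) (i : 'I_n) (x : R) : 'I_n -> R :=
  fun j => if j == i then x else f j.

(* Main.v *)
Require Import Defs.
From mathcomp Require Import all_boot all_order all_algebra.
From mathcomp Require Import ring lra.
Import Order.TTheory GRing.Theory Num.Theory.
Local Open Scope ring_scope.
Set Implicit Arguments. Unset Strict Implicit.

Section Aux.
Variables (R : realFieldType) (n : nat).

Lemma max_exists (hn : (1 < n)%N) (g : 'I_n -> R) (i : 'I_n) :
  exists m : R, (forall j, j != i -> g j <= m) /\ exists2 j, j != i & g j = m.
Proof.
have [j0 hj0] : exists2 j0 : 'I_n, j0 != i & true.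
  case: (boolP (val i == 0%N)) => hi.
  - exists (Ordinal hn) => //; apply/negP => /eqP/(congr1 val) /=.
    by move/eqP: hi => ->.
  - exists (Ordinal (ltn_trans (ltnSn 0) hn)) => //; apply/negP => /eqP/(congr1 val) /= h.
    by move: hi h; case: (i) => [[|k] ?].
case: (@real_arg_maxP R _ j0 (fun j => j != i) g hj0 (fun _ _ => num_real _)).
move=> k hk hmax; exists (g k); split; last by exists k.
by move=> j hj; exact: hmax.
Qed.

Lemma psi2_top (lam : 'I_n -> R -> R) (w b : 'I_n -> R) (cs ps : 'I_n -> R)
  (i : 'I_n) (m : R) :
  let g := fun j => psi lam w b j (cs j) (ps j) in
  (forall j, g j <= g i) -> (forall j, j != i -> g j <= m) ->
  (exists2 j, j != i & g j = m) -> psi2 lam w b cs ps = m.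
Proof.
move=> g hi hm [k hk hkm]; subst m.
rewrite /psi2.
set s := [seq _ | _ <- _].
have hs : s = map g (enum 'I_n) by [].
set rest := map g (rem k (rem i (enum 'I_n))).
have Hrest : forall x, x \in rest -> x <= g k.
  move=> x /mapP [j hj ->]; apply: (hm j).
  have := mem_rem hj; rewrite mem_rem_uniq ?enum_uniq //.
  by rewrite inE => /andP [].
set leT := fun x y : R => y <= x.
have tr : transitive leT by move=> x y z; rewrite /leT => h1 h2; exact: le_trans h2 h1.
have tot : total leT by move=> x y; rewrite /leT le_total.
have asym : antisymmetric leT by move=> x y; rewrite /leT => h; apply: le_anti; rewrite andbC.
have -> : sort leT s = g i :: g k :: sort leT rest.
  apply: (sorted_eq tr asym).
  - exact: sort_sorted.
  - rewrite /= /leT hi /=.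
    case E: (sort leT rest) => [|x t] /=; first by [].
    have := sort_sorted tot rest; rewrite E /= => ->; rewrite andbT.
    by apply: Hrest; rewrite -(mem_sort leT) E inE eqxx.
  - rewrite (perm_sort leT s) hs.
    have ii : i \in enum 'I_n by rewrite mem_enum.
    have kk : k \in rem i (enum 'I_n).
      by rewrite mem_rem_uniq ?enum_uniq // inE hk mem_enum.
    apply: perm_trans (perm_map g (perm_to_rem ii)) _.
    rewrite /= perm_cons.
    apply: perm_trans (perm_map g (perm_to_rem kk)) _.
    by rewrite /= perm_cons perm_sym (perm_sort leT).
by [].
Qed.

Lemma Kle (w v b m : R) : 0 < w -> ((m - b) / w <= v) = (m <= b + w * v).
Proof. by move=> hw; rewrite ler_pdivrMr // lerBlDl mulrC addrC. Qed.

Lemma Kge (w v b m : R) : 0 < w -> (v <= (m - b) / w) = (b + w * v <= m).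
Proof. by move=> hw; rewrite ler_pdivlMr // lerBrDl mulrC. Qed.

Variables (lam : 'I_n -> R -> R) (w b : 'I_n -> R)
  (hlam : forall i p, 0 < lam i p <= 1) (hw : forall i, 0 < w i)
  (sel : ('I_n -> R) -> ('I_n -> R) -> 'I_n)
  (hsel : ama_winner lam w b sel).

Definition spec (cs ps : 'I_n -> R) i m :=
  (forall j, j != i -> psi lam w b j (cs j) (ps j) <= m) /\
  exists2 j, j != i & psi lam w b j (cs j) (ps j) = m.

Lemma util_win cs ps i ci : sel cs ps = i ->
  util lam w b sel i ci cs ps = adval lam i ci (ps i) - (psi2 lam w b cs ps - b i) / w i.
Proof.
move=> hs; rewrite /util /alloc /pay hs eqxx mulr1; congr (_ - _).
rewrite /adval /psi_inv.
have := hlam i (ps i); case/andP => hl _.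
have := hw i => hwi.
field; apply/andP; split; rewrite gt_eqF //.
Qed.

Lemma util_lose cs ps i ci : sel cs ps != i -> util lam w b sel i ci cs ps = 0.
Proof. by move=> hs; rewrite /util /alloc /pay (negbTE hs) mulr0 subr0. Qed.

Lemma util_le cs ps i ci m : spec cs ps i m ->
  util lam w b sel i ci cs ps <= Num.max 0 (adval lam i ci (ps i) - (m - b i) / w i).
Proof.
move=> [h1 h2].
case: (eqVneq (sel cs ps) i) => hs.
- rewrite util_win // (@psi2_top lam w b cs ps i m) //; last by rewrite -hs; apply: hsel.
  by rewrite le_max lexx orbT.
- by rewrite util_lose // le_max lexx.
Qed.

Lemma util_eq cs ps i m : spec cs ps i m ->
  util lam w b sel i (cs i) cs ps = Num.max 0 (adval lam i (cs i) (ps i) - (m - b i) / w i).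
Proof.
move=> [h1 [k hk hkm]].
case: (eqVneq (sel cs ps) i) => hs.
- have e : psi2 lam w b cs ps = m.
    apply: (@psi2_top lam w b cs ps i m) => //; last by exists k.
    by rewrite -hs; apply: hsel.
  rewrite util_win // e.
  apply/esym/max_idPr; rewrite subr_ge0 Kle //.
  by rewrite -hkm; have := hsel cs ps k; rewrite hs.
- rewrite util_lose //; apply/esym/max_idPl.
  rewrite subr_le0 Kge //.
  have h := h1 _ hs; have h' := hsel cs ps i.
  exact: le_trans h' h.
Qed.

Lemma util_eq' cs ps i ci m : cs i = ci -> spec cs ps i m ->
  util lam w b sel i ci cs ps = Num.max 0 (adval lam i ci (ps i) - (m - b i) / w i).
Proof. by move=> <-; exact: util_eq. Qed.

Lemma spec_tr cs ps cs' ps' i m : spec cs ps i m ->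
  (forall j, j != i -> cs' j = cs j) -> (forall j, j != i -> ps' j = ps j) ->
  spec cs' ps' i m.
Proof.
move=> [h1 [k hk hkm]] ec ep; split.
- by move=> j hj; rewrite ec // ep //; apply: h1.
- by exists k => //; rewrite ec // ep.
Qed.

Lemma max0_mono (x y : R) : x <= y -> Num.max 0 x <= Num.max 0 y.
Proof. by move=> xy; rewrite ge_max !le_max lexx /= xy orbT. Qed.
End Aux.

Lemma upd_eq (T : Type) (n : nat) (f : 'I_n -> T) i x : upd f i x i = x.
Proof. by rewrite /upd eqxx. Qed.

Lemma upd_neq (T : Type) (n : nat) (f : 'I_n -> T) i x j : j != i -> upd f i x j = f j.
Proof. by move=> h; rewrite /upd (negbTE h). Qed.

Theorem proposition3 (R : realFieldType) (n : nat) (hn : (1 < n)%N)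
  (clo chi : 'I_n -> R) (hlohi : forall i, clo i <= chi i)
  (lam : 'I_n -> R -> R) (hlam : forall i p, 0 < lam i p <= 1)
  (w b : 'I_n -> R) (hw : forall i, 0 < w i)
  (sel : ('I_n -> R) -> ('I_n -> R) -> 'I_n)
  (hsel : ama_winner lam w b sel) :
  (* incentive compatibility *)
  (forall (i : 'I_n) (ci : R) (ps cs : 'I_n -> R) (ci' : R),
     clo i <= ci <= chi i -> clo i <= ci' <= chi i ->
     (forall j, clo j <= cs j <= chi j) ->
     util lam w b sel i ci (upd cs i ci') ps <= util lam w b sel i ci (upd cs i ci) ps)
  /\
  (* individual rationality *)
  (forall (i : 'I_n) (ci : R) (ps cs : 'I_n -> R),
     clo i <= ci <= chi i ->
     (forall j, clo j <= cs j <= chi j) ->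
     0 <= util lam w b sel i ci (upd cs i ci) ps)
  /\
  (* any maximizer of p' |-> v_i(c_i, p') is a dominant-strategy display price *)
  (forall (i : 'I_n) (ci : R) (ps cs : 'I_n -> R) (pt p' : R),
     clo i <= ci <= chi i ->
     (forall j, clo j <= cs j <= chi j) ->
     (forall q, adval lam i ci q <= adval lam i ci pt) ->
     util lam w b sel i ci (upd cs i ci) (upd ps i p')
       <= util lam w b sel i ci (upd cs i ci) (upd ps i pt)).
Proof.
split; [|split].
- move=> i ci ps cs ci' _ _ _.
  have [m hm] := @max_exists R n hn (fun j => psi lam w b j (upd cs i ci j) (ps j)) i.
  have hm' : spec lam w b (upd cs i ci) ps i m by [].
  rewrite (util_eq' hlam hw hsel (upd_eq cs i ci) hm').
  apply: le_trans (util_le hlam hw hsel ci (spec_tr hm' _ _)) _.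
  + by move=> j hj; rewrite !upd_neq.
  + by [].
  + by rewrite lexx.
- move=> i ci ps cs _ _.
  have [m hm] := @max_exists R n hn (fun j => psi lam w b j (upd cs i ci j) (ps j)) i.
  have hm' : spec lam w b (upd cs i ci) ps i m by [].
  by rewrite (util_eq' hlam hw hsel (upd_eq cs i ci) hm') le_max lexx.
- move=> i ci ps cs pt p' _ _ hpt.
  have [m hm] := @max_exists R n hn
    (fun j => psi lam w b j (upd cs i ci j) (upd ps i pt j)) i.
  have hm' : spec lam w b (upd cs i ci) (upd ps i pt) i m by [].
  rewrite (util_eq' hlam hw hsel (upd_eq cs i ci) hm').
  apply: le_trans (util_le hlam hw hsel ci (spec_tr hm' _ _)) _.
  + by [].
  + by move=> j hj; rewrite !upd_neq.
  + by rewrite !upd_eq; apply: max0_mono; rewrite lerD2r.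
Qed.
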